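(* Fix $k\in\mathbb{N}$, let $m=\bigl[\frac{k+1}2\bigr]$, write $\bar c_k(a):=c_k^{\mathrm{EH}}(E(a,1))/(m\pi)$ for $a\in(0,1]$, and for $l=1,\dots,m$ let $[a_l,b_l]$ denote the interval of those $a$ on which $\bar c_k(a)=\frac lm$. For a normalized generalized symplectic capacity $c$ on $\mathit{Ell}^4$ write $c(a):=c(E(a,1))$. Then: (a) $\bar c_k(a)\le c(a)$ for all $a\in(0,1]$, for every such $c$ satisfying $\bar c_k(a_l)\le c(a_l)$ for all $l=1,\dots,\bigl[\frac{k+1}2\bigr]$; (b) $\bar c_k(a)\ge c(a)$ for all $a\in(0,1]$, for every such $c$ satisfying $\bar c_k(b_l)\ge c(b_l)$ for all $l=1,\dots,\bigl[\frac k2\bigr]$ and $\lim_{a\to0}\frac{c(a)}{a}\le\frac{k}{[\frac{k+1}2]}$.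
   Context: $E(a_1,a_2)=\{z\in\mathbb{C}^2:|z_1|^2/a_1+|z_2|^2/a_2<1\}$, $0<a_1\le a_2\le\infty$. $\mathit{Ell}^4$ is the category of ellipsoids in $(\mathbb{R}^4,\omega_0)$ with morphisms the symplectic embeddings induced by global symplectomorphisms of $\mathbb{R}^4$, where $(U,\alpha^2\omega_0)$ is identified with $\alpha U$. A generalized symplectic capacity is a map $c:\mathit{Ell}^4\to[0,\infty]$ with $c(U)\le c(V)$ whenever there is a morphism $U\to V$ and $c(\alpha U)=\alpha^2c(U)$ for $\alpha>0$; it is normalized if $c(E(1,1))=1$. Ekeland–Hofer capacities on ellipsoids: writing the numbers $j a_i\pi$ ($j\in\mathbb{N}$, $i=1,2$) in increasing order with repetitions as $d_1\le d_2\le\dots$, $c_k^{\mathrm{EH}}(E(a_1,a_2))=d_k$. $[x]$ is the largest integer $\le x$. *)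

(* Defs.v *)
From HB Require Import structures.
From mathcomp Require Import all_boot all_order all_algebra.
From mathcomp Require Import all_classical all_reals all_analysis.
Set Implicit Arguments. Unset Strict Implicit. Unset Printing Implicit Defensive.
Import Order.TTheory GRing.Theory Num.Theory.
Import numFieldNormedType.Exports.
Local Open Scope classical_set_scope.
Local Open Scope ring_scope.

Section Ell.
Variable R : realType.

(* R^4 = C^2 with coordinates (x1, y1, x2, y2), z_j = x_j + i y_j *)
Definition R4 := 'rV[R]_4.
Definition coord (u : R4) (i : nat) : R := u ord0 (inord i).

Definition omega0 (u v : R4) : R :=
  coord u 0 * coord v 1 - coord u 1 * coord v 0
  + coord u 2 * coord v 3 - coord u 3 * coord v 2.

Definition iterD (f : R4 -> R4) (l : seq R4) : R4 -> R4 :=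
  foldr (fun v g => 'D_v g) f l.

Definition smooth (f : R4 -> R4) : Prop :=
  forall l : seq R4, continuous (iterD f l) /\
    forall x v : R4, derivable (iterD f l) x v.

Definition symplectomorphism (phi : R4 -> R4) : Prop :=
  smooth phi /\
  (exists psi : R4 -> R4, smooth psi /\ cancel phi psi /\ cancel psi phi) /\
  (forall x u v : R4, omega0 ('D_u phi x) ('D_v phi x) = omega0 u v).

Definition ellipsoid (a1 : R) (a2 : \bar R) : set R4 :=
  [set z | (coord z 0 ^+ 2 + coord z 1 ^+ 2) / a1
           + (match a2 with
              | EFin r => (coord z 2 ^+ 2 + coord z 3 ^+ 2) / r
              | _ => 0 end) < 1].

Definition ell_obj (a1 : R) (a2 : \bar R) : Prop := 0 < a1 /\ (a1%:E <= a2)%E.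

Definition ell_morph (a1 : R) (a2 : \bar R) (b1 : R) (b2 : \bar R) : Prop :=
  exists phi : R4 -> R4, symplectomorphism phi /\
    phi @` ellipsoid a1 a2 `<=` ellipsoid b1 b2.

(* generalized symplectic capacity on Ell^4, c(E(a1,a2)) = c a1 a2;
   alpha E(a1,a2) = E(alpha^2 a1, alpha^2 a2) *)
Definition gen_capacity (c : R -> \bar R -> \bar R) : Prop :=
  [/\ (forall a1 a2, ell_obj a1 a2 -> (0 <= c a1 a2)%E),
      (forall a1 a2 b1 b2, ell_obj a1 a2 -> ell_obj b1 b2 ->
          ell_morph a1 a2 b1 b2 -> (c a1 a2 <= c b1 b2)%E) &
      (forall alpha a1 a2, 0 < alpha -> ell_obj a1 a2 ->
          c (alpha ^+ 2 * a1) ((alpha ^+ 2)%:E * a2)%E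
          = ((alpha ^+ 2)%:E * c a1 a2)%E)].

Definition normalized (c : R -> \bar R -> \bar R) : Prop := c 1 1%:E = 1%:E.

(* Ekeland-Hofer capacity c_k^EH(E(a1,a2)), a1,a2 finite, k >= 1:
   k-th element of the increasing sequence (with repetitions) of the
   j a_i pi; only j <= k can contribute to the first k elements. *)
Definition EH (k : nat) (a1 a2 : R) : R :=
  nth 0 (sort <=%R ([seq j%:R * a1 * pi | j <- iota 1 k]
                    ++ [seq j%:R * a2 * pi | j <- iota 1 k])) k.-1.

Definition cbar (k : nat) (a : R) : R := EH k a 1 / (((k.+1)./2)%:R * pi).

End Ell.

(* Main.v *)
Require Import Defs.
From HB Require Import structures.
From mathcomp Require Import all_boot all_order all_algebra.
From mathcomp Require Import all_classical all_reals all_analysis.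
Import Order.TTheory GRing.Theory Num.Theory.
Import numFieldNormedType.Exports.
Local Open Scope classical_set_scope.
Local Open Scope ring_scope.
Section Cap.
Variable R : realType.

Lemma iterD_id (l : seq (R4 R)) :
  Defs.iterD id l = id \/ exists c : R4 R, Defs.iterD id l = cst c.
Proof.
elim: l => [|v l [IH|[c IH]]] /=; first by left.
- right; exists v; rewrite /= IH; apply: funext => x; exact: derive_id.
- right; exists 0; rewrite /= IH; apply: funext => x; exact: derive_cst.
Qed.

Lemma id_symp : symplectomorphism (@id (R4 R)).
Proof.
split; [|split].
- move=> l; case: (iterD_id l) => [->|[c ->]]; split.
  + by move=> x; exact: cvg_id.
  + move=> x v; exact: derivable_id.
  + exact: cst_continuous.
  + move=> x v; exact: derivable_cst.
- exists id; split => //.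
  move=> l; case: (iterD_id l) => [->|[c ->]]; split.
  + by move=> x; exact: cvg_id.
  + move=> x v; exact: derivable_id.
  + exact: cst_continuous.
  + move=> x v; exact: derivable_cst.
- by move=> x u v; rewrite !derive_id.
Qed.

Lemma ell_sub (a a' r s : R) : 0 < a -> a <= a' -> 0 < r -> r <= s ->
  ellipsoid a r%:E `<=` ellipsoid a' s%:E.
Proof.
move=> a0 aa r0 rs z; rewrite /ellipsoid /=.
set X := (Defs.coord z 0 ^+ 2 + _); set Y := (Defs.coord z 2 ^+ 2 + _).
have X0 : 0 <= X by rewrite /X addr_ge0 // sqr_ge0.
have Y0 : 0 <= Y by rewrite /Y addr_ge0 // sqr_ge0.
apply: le_lt_trans; apply: lerD.
- rewrite ler_wpM2l // lef_pV2 // posrE; exact: lt_le_trans aa.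
- rewrite ler_wpM2l // lef_pV2 // posrE; exact: lt_le_trans rs.
Qed.

Variable c : R -> \bar R -> \bar R.
Hypothesis hc : gen_capacity c.
Hypothesis hn : normalized c.

Lemma c_mono (a a' : R) : 0 < a -> a <= a' -> a' <= 1 -> (c a 1%:E <= c a' 1%:E)%E.
Proof.
move=> a0 aa a1; case: hc => _ hm _; apply: hm.
- split => //; rewrite lee_fin; exact: le_trans a1.
- split; [exact: lt_le_trans aa|by rewrite lee_fin].
- exists id; split; first exact: id_symp.
  rewrite image_id; exact: ell_sub.
Qed.

Lemma c_fin (a : R) : 0 < a <= 1 -> exists r, c a 1%:E = r%:E /\ 0 <= r <= 1.
Proof.
case/andP => a0 a1.
have h0 : (0 <= c a 1%:E)%E by case: hc => h _ _; apply: h; split => //; rewrite lee_fin.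
have h1 : (c a 1%:E <= 1%:E)%E by rewrite -[X in (_ <= X)%E]hn; apply: c_mono.
move: h0 h1; case: (c a 1%:E) => [r| |] //= h0 h1.
by exists r; rewrite -!lee_fin h0 h1.
Qed.

Lemma c_scale (a a' : R) : 0 < a -> a <= a' -> a' <= 1 ->
  ((a / a')%:E * c a' 1%:E <= c a 1%:E)%E.
Proof.
move=> a0 aa a1.
have a'0 : 0 < a' by exact: lt_le_trans aa.
have q0 : 0 <= a / a' by rewrite divr_ge0 // ltW.
have q1 : a / a' <= 1 by rewrite ler_pdivrMr // mul1r.
case: hc => _ hm hs.
have := hs (Num.sqrt (a / a')) a' 1%:E.
rewrite sqr_sqrtr // sqrtr_gt0 divr_gt0 //.
have : ell_obj a' 1%:E by split => //; rewrite lee_fin.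
move=> o /(_ isT o) <-.
rewrite -mulrA mulVf ?gt_eqF // mulr1 mule1.
apply: hm.
- by split => //; rewrite lee_fin ler_pdivlMr // ler_piMr // ltW.
- by split => //; rewrite lee_fin (le_trans aa).
- exists id; split; first exact: id_symp.
  rewrite image_id; apply: ell_sub => //; by rewrite divr_gt0.
Qed.

End Cap.
From mathcomp Require Import zify.
Section Comb.
Variable R : realType.

Lemma nth_sorted_count (s : seq R) (x : R) i : sorted <=%R s ->
  (count (fun y : R => (y < x)%R) s <= i < count (fun y : R => (y <= x)%R) s)%N -> nth 0 s i = x.
Proof.
elim: s i => [|y s IH] i /= Hs; first by rewrite ?ltn0 ?andbF.
have Hall : all (fun z => y <= z) s.
  by apply: order_path_min => //; exact: le_trans.
have Hs' : sorted <=%R s by exact: path_sorted Hs.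
case: (ltgtP y x) => [yx|xy|yx] /=.
- rewrite !add1n => /andP[h1 h2]; case: i h1 h2 => [|i] //= h1 h2.
  apply: IH => //; apply/andP; split; lia.
- have H0 : count (fun z : R => (z <= x)%R) s = 0%N.
    rewrite -(count_pred0 s); apply: eq_in_count => z zs /=.
    apply/negbTE; rewrite -ltNge; apply: lt_le_trans xy _.
    by move/allP: Hall => /(_ z zs).
  by rewrite !add0n H0 ltn0 andbF.
- subst y.
  have H0 : count (fun y : R => (y < x)%R) s = 0%N.
    rewrite -(count_pred0 s); apply: eq_in_count => z zs /=.
    by apply/negbTE; rewrite -leNgt; move/allP: Hall => /(_ z zs).
  rewrite H0 add0n add1n; case: i => [|i] // H.
  apply: IH => //; rewrite H0; move: H; lia.
Qed.

Lemma cnt_ge (P : pred nat) k p : (p <= k)%N ->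
  (forall j, (1 <= j <= p)%N -> P j) -> (p <= count P (iota 1 k))%N.
Proof.
move=> pk HP; rewrite -(subnKC pk) iotaD count_cat.
have -> : count P (iota 1 p) = p.
  rewrite -[RHS](size_iota 1 p) -count_predT; apply: eq_in_count => j.
  rewrite mem_iota => /andP[h1 h2]; apply: HP; rewrite h1 /=; by rewrite add1n ltnS in h2.
exact: leq_addr.
Qed.

Lemma cnt_le (P : pred nat) k p :
  (forall j, (p < j)%N -> ~~ P j) -> (count P (iota 1 k) <= p)%N.
Proof.
move=> HP; case: (leqP k p) => kp.
  by apply: leq_trans (count_size _ _) _; rewrite size_iota.
rewrite -(subnKC (ltnW kp)) iotaD count_cat.
have -> : count P (iota (1 + p) (k - p)) = 0%N.
  rewrite -[RHS](count_pred0 (iota (1 + p) (k - p))); apply: eq_in_count => j.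
  rewrite mem_iota => /andP[h1 _]; apply/negbTE/HP; by rewrite add1n in h1.
rewrite addn0; apply: leq_trans (count_size _ _) _; by rewrite size_iota.
Qed.

Lemma EH_val k (a y : R) :
  (count (fun j : nat => (j%:R * a < y)%R) (iota 1 k) + count (fun j : nat => (j%:R < y)%R) (iota 1 k)
     <= k.-1 <
   count (fun j : nat => (j%:R * a <= y)%R) (iota 1 k) + count (fun j : nat => (j%:R <= y)%R) (iota 1 k))%N ->
  EH k a 1 = y * pi.
Proof.
move=> H; rewrite /EH; apply: nth_sorted_count; first by apply: sort_sorted => u v; exact: le_total.
have /permP P := permEl (perm_sort <=%R ([seq j%:R * a * pi | j <- iota 1 k]
                    ++ [seq j%:R * 1 * pi | j <- iota 1 k])).
rewrite !P !count_cat !count_map.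
have pi0 := @pi_gt0 R.
have e1 : count (fun j : nat => (j%:R * a * pi < y * pi)%R) (iota 1 k) = count (fun j : nat => (j%:R * a < y)%R) (iota 1 k).
  by apply: eq_count => j; rewrite /= ltr_pM2r.
have e2 : count (fun j : nat => (j%:R * 1 * pi < y * pi)%R) (iota 1 k) = count (fun j : nat => (j%:R < y)%R) (iota 1 k).
  by apply: eq_count => j; rewrite /= mulr1 ltr_pM2r.
have e3 : count (fun j : nat => (j%:R * a * pi <= y * pi)%R) (iota 1 k) = count (fun j : nat => (j%:R * a <= y)%R) (iota 1 k).
  by apply: eq_count => j; rewrite /= ler_pM2r.
have e4 : count (fun j : nat => (j%:R * 1 * pi <= y * pi)%R) (iota 1 k) = count (fun j : nat => (j%:R <= y)%R) (iota 1 k).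
  by apply: eq_count => j; rewrite /= mulr1 ler_pM2r.
rewrite e1 e2 e3 e4.
exact: H.
Qed.

Lemma EH_plateau k l (a : R) : 0 < a -> (1 <= l <= k)%N ->
  l%:R <= (k - l).+1%:R * a -> (k - l)%:R * a <= l%:R -> EH k a 1 = l%:R * pi.
Proof.
move=> a0 /andP[l1 lk] h1 h2; apply: EH_val.
have c1 : (count (fun j : nat => (j%:R * a < l%:R)%R) (iota 1 k) <= k - l)%N.
  apply: cnt_le => j hj /=; rewrite -leNgt (le_trans h1) // ler_pM2r // ler_nat; lia.
have c2 : (count (fun j : nat => (j%:R < (l%:R : R))%R) (iota 1 k) <= l.-1)%N.
  apply: cnt_le => j hj /=; rewrite ltr_nat; lia.
have c3 : (k - l <= count (fun j : nat => (j%:R * a <= l%:R)%R) (iota 1 k))%N.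
  apply: cnt_ge; first exact: leq_subr.
  move=> j /andP[_ hj] /=; apply: le_trans h2; rewrite ler_pM2r // ler_nat; lia.
have c4 : (l <= count (fun j : nat => (j%:R <= (l%:R : R))%R) (iota 1 k))%N.
  by apply: cnt_ge => // j /andP[_ hj] /=; rewrite ler_nat.
apply/andP; split; [apply: leq_trans (leq_add c1 c2) _|apply: leq_trans _ (leq_add c3 c4)]; lia.
Qed.

Lemma EH_linear k l (a : R) : 0 < a -> (1 <= l <= k)%N ->
  l.-1%:R < (k - l).+1%:R * a -> (k - l).+1%:R * a < l%:R ->
  EH k a 1 = ((k - l).+1%:R * a) * pi.
Proof.
move=> a0 /andP[l1 lk] h1 h2; apply: EH_val.
have c1 : (count (fun j : nat => (j%:R * a < (k - l).+1%:R * a)%R) (iota 1 k) <= k - l)%N.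
  apply: cnt_le => j hj /=; rewrite -leNgt ler_pM2r // ler_nat; lia.
have c2 : (count (fun j : nat => (j%:R < (k - l).+1%:R * a)%R) (iota 1 k) <= l.-1)%N.
  apply: cnt_le => j hj /=; rewrite -leNgt; apply: (le_trans (ltW h2)); rewrite ler_nat; lia.
have c3 : ((k - l).+1 <= count (fun j : nat => (j%:R * a <= (k - l).+1%:R * a)%R) (iota 1 k))%N.
  apply: cnt_ge; first lia.
  move=> j /andP[_ hj] /=; rewrite ler_pM2r // ler_nat; lia.
have c4 : (l.-1 <= count (fun j : nat => (j%:R <= (k - l).+1%:R * a)%R) (iota 1 k))%N.
  apply: cnt_ge; first lia.
  move=> j /andP[_ hj] /=; apply: ltW; apply: le_lt_trans h1; rewrite ler_nat; lia.
apply/andP; split; [apply: leq_trans (leq_add c1 c2) _|apply: leq_trans _ (leq_add c3 c4)]; lia.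
Qed.

End Comb.
From mathcomp Require Import ring lra.
Section Main.
Variables (R : realType) (k : nat).
Hypothesis hk : (0 < k)%N.

Lemma cbar_plateau l (a : R) : 0 < a -> (1 <= l <= k)%N ->
  l%:R <= (k - l).+1%:R * a -> (k - l)%:R * a <= l%:R ->
  cbar k a = l%:R / ((k.+1)./2)%:R.
Proof.
move=> a0 hl h1 h2; rewrite /cbar (@EH_plateau R k l a a0 hl h1 h2).
have := @pi_gt0 R; move: (pi : R) => p /gt_eqF pi0.
have m0 : ((k.+1)./2)%:R != 0 :> R by rewrite pnatr_eq0; lia.
by field; rewrite m0 pi0.
Qed.

Lemma cbar_linear l (a : R) : 0 < a -> (1 <= l <= k)%N ->
  l.-1%:R < (k - l).+1%:R * a -> (k - l).+1%:R * a < l%:R ->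
  cbar k a = (k - l).+1%:R * a / ((k.+1)./2)%:R.
Proof.
move=> a0 hl h1 h2; rewrite /cbar (@EH_linear R k l a a0 hl h1 h2).
have := @pi_gt0 R; move: (pi : R) => p /gt_eqF pi0.
have m0 : ((k.+1)./2)%:R != 0 :> R by rewrite pnatr_eq0; lia.
by field; rewrite m0 pi0.
Qed.

Lemma classify (a : R) : 0 < a <= 1 -> exists l,
  [/\ (1 <= l <= (k.+1)./2)%N, l.-1%:R < (k - l).+1%:R * a & (k - l)%:R * a <= l%:R].
Proof.
case/andP => a0 a1.
pose P := fun l : nat => (k - l)%:R * a <= l%:R.
have exP : exists l, P l.
  exists ((k.+1)./2); rewrite /P; apply: le_trans (_ : (k - (k.+1)./2)%:R <= _).
    by rewrite ler_piMr.
  rewrite ler_nat; lia.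
case: (ex_minnP exP) => l Pl lmin.
have l0 : l != 0%N.
  apply/negP => /eqP l0; move: Pl; rewrite /P l0 subn0 mulr0n => Pl.
  have : 0 < k%:R * a by rewrite mulr_gt0 // ltr0n.
  by rewrite ltNge Pl.
have lm : (l <= (k.+1)./2)%N.
  apply: lmin; rewrite /P; apply: le_trans (_ : (k - (k.+1)./2)%:R <= _).
    by rewrite ler_piMr.
  rewrite ler_nat; lia.
exists l; split => //; first by apply/andP; split => //; lia.
have : ~~ P l.-1.
  apply/negP => /lmin; lia.
rewrite /P -ltNge; congr (_ < _ * _); congr (_%:R); lia.
Qed.

End Main.
Lemma lim_bound (R : realType) (c : R -> \bar R -> \bar R) (hc : gen_capacity c)
  (hn : normalized c) (a r : R) (L : \bar R) : 0 < a <= 1 -> c a 1%:E = r%:E ->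
  (fun a : R => (c a 1%:E * (a^-1)%:E)%E) x @[x --> 0^'+] --> L ->
  ((r / a)%:E <= L)%E.
Proof.
move=> /andP[a0 a1] cr hL.
rewrite -(cvg_lim (@ereal_hausdorff R) hL).
apply: lime_ge; first exact: cvgP hL.
near=> x.
have x0 : 0 < x by near: x; exact: nbhs_right_gt.
have xa : x < a by near: x; exact: nbhs_right_lt.
have x1 : 0 < x <= 1 by rewrite x0 /= (le_trans (ltW xa)).
have [s [cs _]] := @c_fin R c hc hn x x1.
have hs := @c_scale R c hc x a x0 (ltW xa) a1.
rewrite cr cs -EFinM lee_fin in hs.
rewrite cs -EFinM lee_fin ler_pdivlMr //.
by have -> : r / a * x = x / a * r by ring.
Unshelve. all: by end_near.
Qed.
Theorem mainTheorem8 (R : realType) (k : nat) (hk : (0 < k)%N)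
  (al bl : nat -> R)
  (hint : forall l : nat, (1 <= l <= (k.+1)./2)%N ->
     [set a : R | 0 < a <= 1 /\ cbar k a = l%:R / ((k.+1)./2)%:R]
       = [set` `[al l, bl l]])
  (c : R -> \bar R -> \bar R) (hc : gen_capacity c) (hn : normalized c) :
  ((forall l : nat, (1 <= l <= (k.+1)./2)%N ->
        ((cbar k (al l))%:E <= c (al l) 1%:E)%E) ->
     forall a : R, 0 < a <= 1 -> ((cbar k a)%:E <= c a 1%:E)%E)
  /\
  ((forall l : nat, (1 <= l <= k./2)%N ->
        (c (bl l) 1%:E <= (cbar k (bl l))%:E)%E) ->
   (exists L : \bar R,
        (fun a : R => (c a 1%:E * (a^-1)%:E)%E) x @[x --> 0^'+] --> L
        /\ (L <= (k%:R / ((k.+1)./2)%:R)%:E)%E) ->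
     forall a : R, 0 < a <= 1 -> (c a 1%:E <= (cbar k a)%:E)%E).
Proof.
have mR : 0 < ((k.+1)./2)%:R :> R by rewrite ltr0n; lia.
pose S := fun (l : nat) (x : R) => 0 < x <= 1 /\ cbar k x = l%:R / ((k.+1)./2)%:R.
have S_itv : forall l x, (1 <= l <= (k.+1)./2)%N -> S l x -> al l <= x <= bl l.
  move=> l x hl hx; have : [set` `[al l, bl l]] x by rewrite -(hint l hl).
  by rewrite /= in_itv.
have itv_S : forall l x, (1 <= l <= (k.+1)./2)%N -> al l <= x <= bl l -> S l x.
  move=> l x hl hx.
  have : [set a : R | 0 < a <= 1 /\ cbar k a = l%:R / ((k.+1)./2)%:R] x.
    by rewrite (hint l hl) /= in_itv.
  by [].
have plat_S : forall l x, (1 <= l <= (k.+1)./2)%N -> 0 < x <= 1 ->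
    l%:R <= (k - l).+1%:R * x -> (k - l)%:R * x <= l%:R -> S l x.
  move=> l x hl hx h1 h2; split => //; apply: cbar_plateau => //.
  - by case/andP: hx.
  - apply/andP; split; lia.
have A_S : forall l, (1 <= l <= (k.+1)./2)%N -> S l (l%:R / (k - l).+1%:R).
  move=> l hl; have q0 : 0 < (k - l).+1%:R :> R by rewrite ltr0n.
  have eq : (k - l).+1%:R * (l%:R / (k - l).+1%:R) = l%:R :> R.
    by rewrite mulrC divfK // gt_eqF.
  apply: plat_S => //.
  - apply/andP; split; first by rewrite divr_gt0 // ltr0n; lia.
    rewrite ler_pdivrMr // mul1r ler_nat; lia.
  - by rewrite eq.
  - rewrite -[X in _ <= X]eq; apply: ler_wpM2r; first by rewrite divr_ge0.
    by rewrite ler_nat.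
have Hend : forall l, (1 <= l <= (k.+1)./2)%N -> [/\ S l (al l), S l (bl l) & 0 < al l].
  move=> l hl; have /andP[h1 h2] := S_itv _ _ hl (A_S l hl).
  have hab : al l <= bl l := le_trans h1 h2.
  have Sal : S l (al l) by apply: itv_S => //; rewrite lexx hab.
  split => //; first by apply: itv_S => //; rewrite lexx hab.
  by case: Sal => /andP[].
split.
- move=> H a ha; have [l [hl h1 h2]] := @classify R k hk a ha.
  have [a0 a1] := andP ha.
  have hlk : (1 <= l <= k)%N by apply/andP; split; lia.
  case: (lerP l%:R ((k - l).+1%:R * a)) => h3.
  + have Sa := plat_S l a hl ha h3 h2.
    have /andP[ala _] := S_itv _ _ hl Sa.
    have [Sal _ al0] := Hend l hl.
    rewrite Sa.2 -Sal.2; apply: le_trans (H l hl) _.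
    exact: c_mono.
  + rewrite (@cbar_linear R k hk l a a0 hlk h1 h3).
    have [Sal _ al0] := Hend l hl.
    have /andP[alA Abl] := S_itv _ _ hl (A_S l hl).
    have q0 : 0 < (k - l).+1%:R :> R by rewrite ltr0n.
    have ala : a < al l.
      rewrite ltNge; apply/negP => hle.
      have aA : a <= l%:R / (k - l).+1%:R by rewrite ler_pdivlMr // mulrC ltW.
      have Sa := itv_S l a hl (introT andP (conj hle (le_trans aA Abl))).
      move: Sa.2; rewrite (@cbar_linear R k hk l a a0 hlk h1 h3).
      move=> /(congr1 (fun t => t * ((k.+1)./2)%:R)); rewrite !divfK ?gt_eqF // => E.
      by move: h3; rewrite E ltxx.
    have hs := @c_scale R c hc a (al l) a0 (ltW ala) (proj2 (andP Sal.1)).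
    have [r [cr _]] := @c_fin R c hc hn (al l) Sal.1.
    have Hr := H l hl; rewrite Sal.2 cr lee_fin in Hr.
    apply: le_trans hs; rewrite cr -EFinM lee_fin.
    have alq : al l * (k - l).+1%:R <= l%:R by rewrite -ler_pdivlMr.
    rewrite (_ : (k - l).+1%:R * a / ((k.+1)./2)%:R =
                 (a / al l) * ((k - l).+1%:R * al l / ((k.+1)./2)%:R)); last first.
      by field; rewrite !gt_eqF.
    apply: ler_wpM2l; first by rewrite divr_ge0 // ltW.
    apply: le_trans Hr; rewrite ler_pM2r ?invr_gt0 //.
    by rewrite mulrC.
- move=> H [L [hL hLk]] a ha; have [l [hl h1 h2]] := @classify R k hk a ha.
  have [a0 a1] := andP ha.
  have hlk : (1 <= l <= k)%N by apply/andP; split; lia.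
  have [r [cr _]] := @c_fin R c hc hn a ha.
  case: (lerP l%:R ((k - l).+1%:R * a)) => h3.
  + have Sa := plat_S l a hl ha h3 h2.
    case: (leqP l (k./2)) => hlk2.
    * have [_ Sbl _] := Hend l hl.
      have /andP[_ abl] := S_itv _ _ hl Sa.
      rewrite Sa.2 -Sbl.2.
      have hl2 : (1 <= l <= k./2)%N by apply/andP; split; lia.
      apply: le_trans (H l hl2).
      exact: c_mono (proj2 (andP Sbl.1)).
    * have lm : l = (k.+1)./2 by lia.
      rewrite Sa.2 lm divff ?gt_eqF //.
      apply: le_trans (@c_mono R c hc a 1 a0 a1 (lexx 1)) _.
      by rewrite hn.
  + rewrite (@cbar_linear R k hk l a a0 hlk h1 h3) cr lee_fin.
    have q0 : 0 < (k - l).+1%:R :> R by rewrite ltr0n.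
    case: (ltnP 1 l) => hl1.
    * have hl' : (1 <= l.-1 <= (k.+1)./2)%N by apply/andP; split; lia.
      have hl2 : (1 <= l.-1 <= k./2)%N by apply/andP; split; lia.
      have e : (k - l.-1 = (k - l).+1)%N by lia.
      have eqB : (k - l).+1%:R * (l.-1%:R / (k - l).+1%:R) = l.-1%:R :> R.
        by rewrite mulrC divfK // gt_eqF.
      have SB : S l.-1 (l.-1%:R / (k - l).+1%:R).
        apply: plat_S => //; rewrite ?e.
        - apply/andP; split; first by rewrite divr_gt0 // ltr0n; lia.
          rewrite ler_pdivrMr // mul1r ler_nat; lia.
        - rewrite -[X in X <= _]eqB; apply: ler_wpM2r; first by rewrite divr_ge0.
          by rewrite ler_nat.
        - by rewrite eqB.
      have /andP[alB Bbl] := S_itv _ _ hl' SB.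
      have [_ Sbl _] := Hend _ hl'.
      have [/andP[bl0 bl1] _] := Sbl.
      have Ba : l.-1%:R / (k - l).+1%:R < a by rewrite ltr_pdivrMr // mulrC.
      have bla : bl l.-1 <= a.
        rewrite leNgt; apply/negP => abl.
        have Sa := itv_S l.-1 a hl' (introT andP (conj (le_trans alB (ltW Ba)) (ltW abl))).
        move: Sa.2; rewrite (@cbar_linear R k hk l a a0 hlk h1 h3).
        move=> /(congr1 (fun t => t * ((k.+1)./2)%:R)); rewrite !divfK ?gt_eqF // => E.
        by move: h1; rewrite E ltxx.
      have hs := @c_scale R c hc (bl l.-1) a bl0 bla a1.
      have Hb := H l.-1 hl2; rewrite Sbl.2 in Hb.
      have hs2 := le_trans hs Hb; rewrite cr -EFinM lee_fin in hs2.
      have Bq : l.-1%:R <= (k - l).+1%:R * bl l.-1 by rewrite mulrC -ler_pdivrMr.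
      have hs3 : bl l.-1 / a * r <= (k - l).+1%:R * bl l.-1 / ((k.+1)./2)%:R.
        apply: le_trans hs2 _; rewrite ler_pM2r ?invr_gt0 //.
      have -> : r = (a / bl l.-1) * (bl l.-1 / a * r) by field; rewrite !gt_eqF.
      rewrite (_ : (k - l).+1%:R * a / ((k.+1)./2)%:R =
                 (a / bl l.-1) * ((k - l).+1%:R * bl l.-1 / ((k.+1)./2)%:R)); last first.
        by field; rewrite !gt_eqF.
      apply: ler_wpM2l => //; by rewrite divr_ge0 // ltW.
    * have l1 : l = 1%N by lia.
      have hb := @lim_bound R c hc hn a r L ha cr hL.
      have := le_trans hb hLk; rewrite lee_fin ler_pdivrMr // => hr.
      apply: le_trans hr _; rewrite l1 (_ : ((k - 1).+1 = k)%N); [by rewrite mulrAC | lia].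
Qed.
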